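(* Let $1\le k\le\infty$ and $\mathbf n=(n_i)$ positive integers such that $\{\ln n_i\}_{1\le i\le k}$ is rationally independent. Then the topological $k$-graph $\Lambda_{\mathbf n}$ satisfies Condition (A).
   Context: $\mathbf n^p=\prod n_i^{p_i}$. $\Lambda_{\mathbf n}=\bigsqcup_{p\in\mathbb N^k}\mathbb T\times\{p\}$ with vertices $\mathbb T\times\{0\}$, $r(z,p)=(z,0)$, $s(z,p)=(z^{\mathbf n^p},0)$, $d(z,p)=p$, composition $(z,p)(z^{\mathbf n^p},q)=(z,p+q)$, topology of a disjoint union of circles. An infinite path in a (topological) $k$-graph $\Lambda$ is a map $\mu$ from $\{(p,q)\in\mathbb N^k\times\mathbb N^k:p\le q\}$ to $\Lambda$ with $d(\mu(p,q))=q-p$ and $\mu(p,q)\mu(q,r)=\mu(p,r)$; its range is $\mu(0,0)$; the shift is $\sigma^m(\mu)(p,q)=\mu(p+m,q+m)$. Condition (A): for every $v\in\Lambda^0$ and every open neighbourhood $V$ of $v$ there exist $v'\in V$ and an infinite path $\mu$ with range $v'$ such that $\sigma^p(\mu)\neq\sigma^q(\mu)$ whenever $p\neq q$. Rationally independent means every finite subfamily is linearly independent over $\mathbb Q$. *)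

(* Defs.v *)
From Stdlib Require Import Reals QArith Qreals ClassicalEpsilon.
Open Scope R_scope.

(* ---------- The index set {i : 1 <= i <= k}, 1 <= k <= infinity ----------
   We index from 0: k = Some m means indices {0,...,m-1}; k = None means
   k = infinity, indices = all of nat. *)
Definition inI (k : option nat) (i : nat) : Prop :=
  match k with Some m => (i < m)%nat | None => True end.

Definition valid_k (k : option nat) : Prop :=
  match k with Some m => (1 <= m)%nat | None => True end.

Definition isDeg (k : option nat) (p : nat -> nat) : Prop :=
  (forall i, ~ inI k i -> p i = 0%nat) /\
  (exists B, forall i, (B <= i)%nat -> p i = 0%nat).

Definition degLe (p q : nat -> nat) : Prop := forall i, (p i <= q i)%nat.
Definition degAdd (p q : nat -> nat) : nat -> nat := fun i => (p i + q i)%nat.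
Definition degSub (q p : nat -> nat) : nat -> nat := fun i => (q i - p i)%nat.
Definition deg0 : nat -> nat := fun _ => 0%nat.

(* a bound for the support of p (valid whenever p is finitely supported) *)
Definition suppBound (p : nat -> nat) : nat :=
  epsilon (inhabits 0%nat) (fun B => forall i, (B <= i)%nat -> p i = 0%nat).

Fixpoint prodUpTo (f : nat -> nat) (B : nat) : nat :=
  match B with O => 1%nat | S B' => (prodUpTo f B' * f B')%nat end.

Definition npow (n : nat -> nat) (p : nat -> nat) : nat :=
  prodUpTo (fun i => Nat.pow (n i) (p i)) (suppBound p).

Definition onT (z : R * R) : Prop := (fst z)^2 + (snd z)^2 = 1.
Definition cmul (z w : R * R) : R * R :=
  (fst z * fst w - snd z * snd w, fst z * snd w + snd z * fst w).
Fixpoint cpow (z : R * R) (N : nat) : R * R :=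
  match N with O => (1, 0) | S N' => cmul (cpow z N') z end.
Definition cdist (z w : R * R) : R :=
  sqrt ((fst z - fst w)^2 + (snd z - snd w)^2).

Definition Lam := ((R * R) * (nat -> nat))%type.
Definition inLam (k : option nat) (a : Lam) : Prop := onT (fst a) /\ isDeg k (snd a).
Definition lrange (a : Lam) : Lam := (fst a, deg0).
Definition lsource (n : nat -> nat) (a : Lam) : Lam := (cpow (fst a) (npow n (snd a)), deg0).
Definition ldeg (a : Lam) : nat -> nat := snd a.
(* composition (z,p)(z^{n^p},q) = (z,p+q), defined when s(a) = r(b) *)
Definition lcomp (a b : Lam) : Lam := (fst a, degAdd (snd a) (snd b)).

(* ---------- Infinite paths ----------
   mu is given as a total function on pairs; only its values on
   {(p,q) in N^k x N^k : p <= q} matter. *)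
Definition infPath (k : option nat) (n : nat -> nat) (mu : (nat -> nat) -> (nat -> nat) -> Lam) : Prop :=
  (forall p q, isDeg k p -> isDeg k q -> degLe p q ->
     inLam k (mu p q) /\ ldeg (mu p q) = degSub q p) /\
  (forall p q r, isDeg k p -> isDeg k q -> isDeg k r -> degLe p q -> degLe q r ->
     lsource n (mu p q) = lrange (mu q r) /\ lcomp (mu p q) (mu q r) = mu p r).

Definition pathRange (mu : (nat -> nat) -> (nat -> nat) -> Lam) : Lam := mu deg0 deg0.

Definition shift (m : nat -> nat) (mu : (nat -> nat) -> (nat -> nat) -> Lam) :
  (nat -> nat) -> (nat -> nat) -> Lam :=
  fun p q => mu (degAdd p m) (degAdd q m).

Definition pathNeq (k : option nat) (mu nu : (nat -> nat) -> (nat -> nat) -> Lam) : Prop :=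
  exists p q, isDeg k p /\ isDeg k q /\ degLe p q /\ mu p q <> nu p q.

Definition isVertex (k : option nat) (v : Lam) : Prop := onT (fst v) /\ snd v = deg0.
Definition openInVertices (k : option nat) (V : Lam -> Prop) : Prop :=
  (forall w, V w -> isVertex k w) /\
  (forall w, V w -> exists eps, eps > 0 /\
      forall w', isVertex k w' -> cdist (fst w) (fst w') < eps -> V w').

Definition conditionA (k : option nat) (n : nat -> nat) : Prop :=
  forall v, isVertex k v ->
  forall V, openInVertices k V -> V v ->
  exists v' mu, V v' /\ infPath k n mu /\ pathRange mu = v' /\
    (forall p q, isDeg k p -> isDeg k q -> p <> q -> pathNeq k (shift p mu) (shift q mu)).

Fixpoint sumUpTo (f : nat -> R) (B : nat) : R :=
  match B with O => 0 | S B' => sumUpTo f B' + f B' end.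

Definition ratIndepLn (k : option nat) (n : nat -> nat) : Prop :=
  forall (B : nat) (c : nat -> Q),
    (forall i, (i < B)%nat -> inI k i) ->
    sumUpTo (fun i => Q2R (c i) * ln (INR (n i))) B = 0 ->
    forall i, (i < B)%nat -> c i == 0%Q.

(* Main.v *)
Require Import Defs.
From Stdlib Require Import Reals QArith Qreals ClassicalEpsilon Lia Lra Psatz FunctionalExtensionality Classical ZArith.
Open Scope R_scope.

Lemma nat_no_sqrt2 : forall a d : nat, d <> 0%nat -> (a * a <> 2 * d * d)%nat.
Proof.
  intro a. induction a as [a IH] using (well_founded_induction Wf_nat.lt_wf).
  intros d Hd E.
  destruct (Nat.Even_or_Odd a) as [[m Hm]|[m Hm]]; subst a.
  - assert (Hm0 : m <> 0%nat) by (intro; subst; nia).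
    assert (E2 : (d * d = 2 * m * m)%nat) by nia.
    assert (Hlt : (d < 2 * m)%nat) by nia.
    exact (IH d Hlt m Hm0 E2).
  - nia.
Qed.

Lemma Z_no_sqrt2 : forall a d : Z, d <> 0%Z -> (a * a <> 2 * d * d)%Z.
Proof.
  intros a d Hd E.
  apply (nat_no_sqrt2 (Z.abs_nat a) (Z.abs_nat d)); [lia|].
  apply Nat2Z.inj_iff. rewrite !Nat2Z.inj_mul, !Zabs2Nat.id_abs.
  change (Z.of_nat 2) with 2%Z. rewrite <- !Z.abs_mul. rewrite E. rewrite !Z.abs_mul. simpl. reflexivity.
Qed.

Definition rational (x : R) : Prop := exists a d : Z, d <> 0%Z /\ x * IZR d = IZR a.

Lemma rational_sub x y : rational x -> rational y -> rational (y - x).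
Proof.
  intros [a1 [d1 [H1 E1]]] [a2 [d2 [H2 E2]]].
  exists (a2 * d1 - a1 * d2)%Z, (d1 * d2)%Z. split; [lia|].
  rewrite minus_IZR, !mult_IZR, <- E1, <- E2. ring.
Qed.

Lemma sqrt2_irr : ~ rational (sqrt 2).
Proof.
  intros [a [d [Hd E]]].
  apply (Z_no_sqrt2 a d Hd). apply eq_IZR.
  rewrite !mult_IZR, <- E.
  replace (IZR a * IZR a) with ((sqrt 2 * IZR d) * (sqrt 2 * IZR d)) by (rewrite E; ring).
  replace ((sqrt 2 * IZR d) * (sqrt 2 * IZR d)) with ((sqrt 2 * sqrt 2) * IZR d * IZR d) by ring.
  rewrite sqrt_sqrt by lra. ring.
Qed.

Lemma exists_nat_gt (x : R) : exists K : nat, x < INR K /\ 0 < INR K.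
Proof.
  destruct (archimed (Rmax x 1)) as [H1 _].
  exists (Z.to_nat (up (Rmax x 1))).
  assert (0 < IZR (up (Rmax x 1))) by (pose proof (Rmax_r x 1); lra).
  assert (Hp : (0 < up (Rmax x 1))%Z) by (apply lt_IZR; auto).
  rewrite INR_IZR_INZ, Z2Nat.id by lia.
  pose proof (Rmax_l x 1). lra.
Qed.

Lemma irr_near (th0 eps : R) : eps > 0 ->
  exists th, ~ rational th /\ Rabs (PI * th - PI * th0) < eps.
Proof.
  intros He.
  assert (Hs2 : sqrt 2 < 2).
  { assert (0 <= sqrt 2) by apply sqrt_pos. pose proof (sqrt_sqrt 2). nra. }
  assert (Hs0 : 0 <= sqrt 2) by apply sqrt_pos.
  pose proof PI_RGT_0.
  destruct (exists_nat_gt (4 * PI / eps)) as [K [HK HK0]].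
  set (eta := sqrt 2 / INR K).
  assert (Heta : 0 <= eta) by (unfold eta; apply Rmult_le_pos; [lra|left; apply Rinv_0_lt_compat; lra]).
  assert (Heta2 : PI * (2 * eta) < eps).
  { unfold eta. apply (Rmult_lt_reg_r (INR K)); auto.
    field_simplify; [|lra].
    apply (Rmult_lt_compat_r eps) in HK; auto.
    unfold Rdiv in HK. rewrite Rmult_assoc, Rinv_l in HK by lra. nra. }
  destruct (classic (rational (th0 + eta))) as [R1|R1].
  - destruct (classic (rational (th0 + 2 * eta))) as [R2|R2].
    + exfalso. apply sqrt2_irr.
      pose proof (rational_sub _ _ R1 R2) as [a [d [Hd E]]].
      exists (a * Z.of_nat K)%Z, d. split; auto.
      rewrite mult_IZR, <- INR_IZR_INZ, <- E. unfold eta. field. lra.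
    + exists (th0 + 2 * eta). split; auto.
      rewrite Rabs_right; nra.
  - exists (th0 + eta). split; auto. rewrite Rabs_right; nra.
Qed.

Lemma cpow_polar (t : R) (N : nat) : cpow (cos t, sin t) N = (cos (INR N * t), sin (INR N * t)).
Proof.
  induction N as [|N IH].
  - simpl. rewrite Rmult_0_l, cos_0, sin_0. reflexivity.
  - simpl cpow. rewrite IH. unfold cmul; simpl fst; simpl snd.
    rewrite S_INR. replace ((INR N + 1) * t) with (INR N * t + t) by ring.
    rewrite cos_plus, sin_plus. f_equal; ring.
Qed.

Lemma onT_polar t : onT (cos t, sin t).
Proof. unfold onT; simpl. pose proof (sin2_cos2 t). unfold Rsqr in H. nra. Qed.

Lemma angle_exists x y : onT (x, y) -> exists t, x = cos t /\ y = sin t.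
Proof.
  unfold onT; simpl. intro H.
  assert (Hx : -1 <= x <= 1) by (split; nra).
  assert (Hs : sqrt (1 - x²) = Rabs y).
  { replace (1 - x²) with (y²) by (unfold Rsqr; nra). apply sqrt_Rsqr_abs. }
  destruct (Rle_or_lt 0 y) as [Hy|Hy].
  - exists (acos x). rewrite cos_acos, sin_acos by auto. rewrite Hs, Rabs_right; lra.
  - exists (- acos x). rewrite cos_neg, sin_neg, cos_acos, sin_acos by auto.
    rewrite Hs, Rabs_left; lra.
Qed.

Lemma abs_sin_pos y : 0 < y -> Rabs (sin y) <= y.
Proof.
  intro H. pose proof (sin_lt_x y H). pose proof (SIN_bound y).
  apply Rabs_le. split; [|lra].
  destruct (Rle_or_lt y 1); [|lra].
  pose proof PI2_1. assert (0 < sin y) by (apply sin_gt_0; lra). lra.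
Qed.

Lemma abs_sin_le x : Rabs (sin x) <= Rabs x.
Proof.
  destruct (Rtotal_order x 0) as [H|[H|H]].
  - pose proof (abs_sin_pos (-x) ltac:(lra)). rewrite sin_neg, Rabs_Ropp in H0.
    rewrite (Rabs_left x) by lra. lra.
  - subst. rewrite sin_0, Rabs_R0. lra.
  - rewrite (Rabs_right x) by lra. apply abs_sin_pos; lra.
Qed.

Lemma cdist_polar a b : cdist (cos a, sin a) (cos b, sin b) <= Rabs (a - b).
Proof.
  unfold cdist; cbn [fst snd].
  set (s := sin ((a - b) / 2)).
  assert (E : (cos a - cos b) ^ 2 + (sin a - sin b) ^ 2 = 4 * (s * s)).
  { pose proof (sin2_cos2 a). pose proof (sin2_cos2 b). unfold Rsqr in *.
    pose proof (cos_2a_sin ((a - b)/2)). replace (2 * ((a - b) / 2)) with (a - b) in H1 by field.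
    rewrite cos_minus in H1. fold s in H1. nra. }
  rewrite E. rewrite <- sqrt_Rsqr_abs. apply sqrt_le_1_alt.
  pose proof (abs_sin_le ((a - b) / 2)). fold s in H.
  assert (s * s <= ((a - b)/2) * ((a - b)/2)).
  { set (c := (a - b) / 2) in *.
    assert (s*s = Rabs s * Rabs s) by (rewrite <- Rabs_mult; rewrite Rabs_right; nra).
    assert (c*c = Rabs c * Rabs c) by (rewrite <- Rabs_mult; rewrite Rabs_right; nra).
    pose proof (Rabs_pos s). nra. }
  unfold Rsqr. nra.
Qed.

Definition fpow (n p : nat -> nat) : nat -> nat := fun i => Nat.pow (n i) (p i).

Lemma prodUpTo_stable n p B : (forall i, (B <= i)%nat -> p i = 0%nat) ->
  forall d, prodUpTo (fpow n p) (B + d) = prodUpTo (fpow n p) B.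
Proof.
  intros H d. induction d as [|d IH].
  - rewrite Nat.add_0_r. reflexivity.
  - rewrite Nat.add_succ_r. simpl. rewrite IH. unfold fpow. rewrite H by lia. simpl. lia.
Qed.

Lemma npow_eq n p B : (forall i, (B <= i)%nat -> p i = 0%nat) ->
  npow n p = prodUpTo (fpow n p) B.
Proof.
  intro H. unfold npow.
  assert (Hs : forall i, (suppBound p <= i)%nat -> p i = 0%nat).
  { unfold suppBound. apply epsilon_spec. exists B. exact H. }
  change (prodUpTo (fun i => Nat.pow (n i) (p i)) (suppBound p)) with (prodUpTo (fpow n p) (suppBound p)).
  set (M := Nat.max B (suppBound p)).
  replace M with (B + (M - B))%nat in * by lia.
  transitivity (prodUpTo (fpow n p) M).
  - replace M with (suppBound p + (M - suppBound p))%nat by lia.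
    symmetry. apply prodUpTo_stable; auto.
  - unfold M at 1. replace (Nat.max B (suppBound p)) with (B + (M - B))%nat by (unfold M; lia).
    apply prodUpTo_stable; auto.
Qed.

Lemma prodUpTo_mul f g B : prodUpTo (fun i => f i * g i)%nat B = (prodUpTo f B * prodUpTo g B)%nat.
Proof. induction B; simpl; [reflexivity|]. rewrite IHB. lia. Qed.

Lemma npow_add n p q Bp Bq :
  (forall i, (Bp <= i)%nat -> p i = 0%nat) -> (forall i, (Bq <= i)%nat -> q i = 0%nat) ->
  npow n (degAdd p q) = (npow n p * npow n q)%nat.
Proof.
  intros Hp Hq. set (B := Nat.max Bp Bq).
  rewrite (npow_eq n p B) by (intros; apply Hp; lia).
  rewrite (npow_eq n q B) by (intros; apply Hq; lia).
  rewrite (npow_eq n (degAdd p q) B) by (intros; unfold degAdd; rewrite Hp, Hq by lia; reflexivity).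
  rewrite <- prodUpTo_mul. f_equal. extensionality i. unfold fpow, degAdd. apply Nat.pow_add_r.
Qed.

Lemma prodUpTo_pos n p B : (forall i, (i < B)%nat -> (1 <= n i)%nat) -> (0 < prodUpTo (fpow n p) B)%nat.
Proof.
  induction B; simpl; intros H; [lia|].
  assert (0 < fpow n p B)%nat by (unfold fpow; apply Nat.neq_0_lt_0, Nat.pow_nonzero; specialize (H B); lia).
  pose proof (IHB ltac:(intros; apply H; lia)). nia.
Qed.

Lemma ln_prodUpTo n p B : (forall i, (i < B)%nat -> (1 <= n i)%nat) ->
  ln (INR (prodUpTo (fpow n p) B)) = sumUpTo (fun i => INR (p i) * ln (INR (n i))) B.
Proof.
  induction B; intros H; simpl.
  - apply ln_1.
  - rewrite mult_INR, ln_mult.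
    + rewrite IHB by (intros; apply H; lia). f_equal. unfold fpow. rewrite pow_INR, ln_pow; auto.
      apply lt_0_INR. specialize (H B). lia.
    + apply lt_0_INR. apply prodUpTo_pos. intros; apply H; lia.
    + apply lt_0_INR. unfold fpow. apply Nat.neq_0_lt_0, Nat.pow_nonzero; specialize (H B); lia.
Qed.

Lemma sumUpTo_sub f g B : sumUpTo (fun i => f i - g i) B = sumUpTo f B - sumUpTo g B.
Proof. induction B; simpl; [ring|]. rewrite IHB. ring. Qed.

Lemma common_bound k p q : isDeg k p -> isDeg k q ->
  exists B, (forall i, (B <= i)%nat -> p i = 0%nat /\ q i = 0%nat) /\ (forall i, (i < B)%nat -> inI k i).
Proof.
  intros [Hp1 [Bp Hp]] [Hq1 [Bq Hq]]. destruct k as [m|].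
  - exists m. split.
    + intros i Hi. split; [apply Hp1|apply Hq1]; simpl; lia.
    + intros i Hi. simpl. lia.
  - exists (Nat.max Bp Bq). split.
    + intros i Hi. split; [apply Hp|apply Hq]; lia.
    + intros; simpl; auto.
Qed.

Lemma npow_inj k n p q : (forall i, inI k i -> (1 <= n i)%nat) -> ratIndepLn k n ->
  isDeg k p -> isDeg k q -> npow n p = npow n q -> p = q.
Proof.
  intros Hn Hind Hp Hq E.
  destruct (common_bound k p q Hp Hq) as [B [HB HI]].
  rewrite (npow_eq n p B) in E by (intros; apply HB; auto).
  rewrite (npow_eq n q B) in E by (intros; apply HB; auto).
  assert (Hn' : forall i, (i < B)%nat -> (1 <= n i)%nat) by auto.
  assert (L := f_equal (fun x => ln (INR x)) E). cbv beta in L.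
  rewrite !ln_prodUpTo in L by auto.
  set (c := fun i => inject_Z (Z.of_nat (p i) - Z.of_nat (q i))).
  assert (S : sumUpTo (fun i => Q2R (c i) * ln (INR (n i))) B = 0).
  { replace (fun i => Q2R (c i) * ln (INR (n i))) with
      (fun i => INR (p i) * ln (INR (n i)) - INR (q i) * ln (INR (n i))).
    - rewrite sumUpTo_sub, L. ring.
    - extensionality i. unfold c, Q2R. simpl. rewrite minus_IZR, <- !INR_IZR_INZ. field. }
  pose proof (Hind B c HI S) as HZ.
  extensionality i. destruct (Nat.lt_ge_cases i B) as [Hi|Hi].
  - specialize (HZ i Hi). unfold c in HZ.
    unfold Qeq in HZ; simpl in HZ. lia.
  - destruct (HB i Hi) as [-> ->]. reflexivity.
Qed.

Lemma cpow_inj th A Bn : ~ rational th ->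
  cpow (cos (PI * th), sin (PI * th)) A = cpow (cos (PI * th), sin (PI * th)) Bn -> A = Bn.
Proof.
  intros Hirr E. rewrite !cpow_polar in E. injection E as E1 E2.
  destruct (Nat.eq_dec A Bn) as [|Hne]; auto. exfalso.
  assert (S : sin (INR A * (PI * th) - INR Bn * (PI * th)) = 0).
  { rewrite sin_minus, E1, E2. ring. }
  destruct (sin_eq_0_0 _ S) as [kk Hk].
  apply Hirr. exists kk, (Z.of_nat A - Z.of_nat Bn)%Z. split; [lia|].
  rewrite minus_IZR, <- !INR_IZR_INZ.
  pose proof PI_RGT_0.
  apply (Rmult_eq_reg_r PI); [|lra]. rewrite <- Hk. ring.
Qed.

Theorem mainTheorem9 (k : option nat) (n : nat -> nat) :
  valid_k k ->
  (forall i, inI k i -> (1 <= n i)%nat) ->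
  ratIndepLn k n ->
  conditionA k n.
Proof.
  intros _ Hn Hind v [Hv Hv0] V [HV1 HV2] Vv.
  destruct (HV2 v Vv) as [eps [Heps Hball]].
  destruct v as [[x y] sv]. simpl in Hv, Hv0. subst sv.
  destruct (angle_exists x y Hv) as [t0 [Hx Hy]]. subst x y.
  pose proof PI_RGT_0.
  destruct (irr_near (t0 / PI) eps Heps) as [th [Hirr Hnear]].
  replace (PI * (t0 / PI)) with t0 in Hnear by (field; lra).
  set (t := PI * th) in *.
  set (z := (cos t, sin t)).
  set (mu := fun p q : nat -> nat => (cpow z (npow n p), degSub q p) : Lam).
  assert (Hnp0 : npow n deg0 = 1%nat) by (apply (npow_eq n deg0 0); auto).
  assert (Hbnd : forall p, isDeg k p -> exists B, forall i, (B <= i)%nat -> p i = 0%nat)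
    by (intros p [_ H0]; exact H0).
  exists ((cos t, sin t), deg0), mu. split; [|split; [|split]].
  - apply Hball.
    + split; [apply onT_polar|reflexivity].
    + simpl. eapply Rle_lt_trans; [apply cdist_polar|].
      rewrite Rabs_minus_sym. exact Hnear.
  - split.
    + intros p q Hp Hq Hpq. split; [|reflexivity].
      split.
      * simpl. unfold z. rewrite cpow_polar. apply onT_polar.
      * destruct Hq as [Hq1 [Bq HBq]]. split.
        -- intros i Hi. simpl. unfold degSub. rewrite Hq1; auto.
        -- exists Bq. intros i Hi. simpl. unfold degSub. rewrite HBq; auto.
    + intros p q r Hp Hq Hr Hpq Hqr. split.
      * unfold lsource, lrange, mu. simpl fst. simpl snd.
        destruct (Hbnd p Hp) as [Bp HBp]. destruct (Hbnd q Hq) as [Bq HBq].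
        assert (Eq : q = degAdd p (degSub q p))
          by (extensionality i; unfold degAdd, degSub; specialize (Hpq i); lia).
        assert (Hnq : npow n q = (npow n p * npow n (degSub q p))%nat).
        { rewrite Eq at 1. apply (npow_add n p (degSub q p) Bp Bq); auto.
          intros i Hi. unfold degSub. rewrite HBq; auto. }
        unfold z. rewrite !cpow_polar, Hnq, mult_INR. f_equal; f_equal; f_equal; ring.
      * unfold lcomp, mu. simpl. f_equal. extensionality i. unfold degAdd, degSub.
        specialize (Hpq i). specialize (Hqr i). lia.
  - unfold pathRange, mu. rewrite Hnp0. unfold z. rewrite cpow_polar. simpl INR.
    rewrite Rmult_1_l. reflexivity.
  - intros p q Hp Hq Hne. exists deg0, deg0.
    split; [split; [intros; reflexivity|exists 0%nat; intros; reflexivity]|].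
    split; [split; [intros; reflexivity|exists 0%nat; intros; reflexivity]|].
    split; [intro; lia|].
    unfold shift, mu. intro E. injection E as E1 _.
    change (degAdd deg0 p) with p in E1. change (degAdd deg0 q) with q in E1.
    apply Hne. apply (npow_inj k n p q Hn Hind Hp Hq).
    exact (cpow_inj th _ _ Hirr E1).
Qed.
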